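(* Let $F$ be a finite forest each of whose connected components is a caterpillar with at least one edge. Then $F$ is odd-graceful.
   Context: A caterpillar is a tree with the property that removing all of its end vertices (leaves) leaves a path. A graph $G$ with $n$ edges is odd-graceful if there is an injective map $f:V(G)\to\{0,1,2,\dots,2n-1\}$ such that the set of induced edge weights $\{|f(x)-f(y)| : xy\in E(G)\}$ equals $\{1,3,5,\dots,2n-1\}$. *)

(* Defs.v *)
From mathcomp Require Import all_boot.
Set Implicit Arguments. Unset Strict Implicit. Unset Printing Implicit Defensive.

Definition simple_graph (V : finType) (e : rel V) : Prop :=
  symmetric e /\ irreflexive e.

Definition edges (V : finType) (e : rel V) : {set {set V}} :=
  [set [set p.1; p.2] | p : V * V & e p.1 p.2].

Definition degree (V : finType) (e : rel V) (x : V) : nat := #|[set y | e x y]|.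

Definition forest (V : finType) (e : rel V) : Prop :=
  forall s : seq V, uniq s -> 3 <= size s -> ~~ cycle e s.

Definition component (V : finType) (e : rel V) (v : V) : {set V} :=
  [set u | connect e v u].

(* The empty graph (k = 0) counts as a (trivial) path. *)
Definition induces_path (V : finType) (e : rel V) (S : {set V}) : Prop :=
  exists s : seq V, uniq s /\ S =i s /\
    forall x y, x \in S -> y \in S ->
      (e x y <-> exists2 i, i.+1 < size s &
         ((nth x s i = x /\ nth x s i.+1 = y) \/ (nth x s i = y /\ nth x s i.+1 = x))).

Definition caterpillar_component (V : finType) (e : rel V) (v : V) : Prop :=
  induces_path e [set u in component e v | degree e u != 1].

Definition has_edge_in (V : finType) (e : rel V) (C : {set V}) : Prop :=
  exists x y, x \in C /\ y \in C /\ e x y.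

Definition natdist (a b : nat) : nat := (a - b) + (b - a).

Definition odd_graceful (V : finType) (e : rel V) : Prop :=
  let n := #|edges e| in
  exists f : V -> nat,
    injective f /\ (forall x, f x < 2 * n) /\
    (forall w, (exists x y, e x y /\ w = natdist (f x) (f y)) <->
               (odd w /\ w < 2 * n)).

(* Main.v *)
Require Import Defs.
From mathcomp Require Import all_boot zify.
Set Implicit Arguments. Unset Strict Implicit. Unset Printing Implicit Defensive.

Definition stair_core (V : finType) (e : rel V) (D : {set V}) (A : pred V)
  (r : V -> nat) (P Q : nat) : Prop :=
  [/\ (forall x y, x \in D -> y \in D -> e x y -> A x != A y),
      (forall x y, x \in D -> y \in D -> A x = A y -> r x = r y -> x = y),
      (forall x, x \in D -> r x < (if A x then P else Q)),
      (forall x y, x \in D -> y \in D -> e x y -> r x + r y < P + Q - 1) &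
      ((forall j, j < P + Q - 1 -> exists x y, [/\ x \in D, y \in D, e x y & r x + r y = j]) /\
      (forall x y x' y', x \in D -> y \in D -> x' \in D -> y' \in D -> e x y -> e x' y' ->
         r x + r y = r x' + r y' -> (x = x' /\ y = y') \/ (x = y' /\ y = x')))].

Definition stair (V : finType) (e : rel V) (D : {set V}) (h : V) : Prop :=
  exists A r P Q, [/\ stair_core e D A r P Q, h \in D & r h + 1 = (if A h then P else Q)].

Lemma stair_flip (V : finType) (e : rel V) D A r P Q :
  stair_core e D A r P Q -> stair_core e D (fun x => ~~ A x) r Q P.
Proof.
case=> [bip inj bnd sm [sj ij]]; split.
- by move=> x y xD yD exy; have := bip x y xD yD exy; case: (A x); case: (A y).
- by move=> x y xD yD /negb_inj; apply: inj.
- by move=> x xD; rewrite if_neg; apply: bnd.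
- by rewrite addnC.
- by rewrite addnC.
Qed.

Lemma stair_flipA (V : finType) (e : rel V) D h :
  stair e D h -> exists A r P Q, [/\ stair_core e D A r P Q, h \in D, A h & r h + 1 = P].
Proof.
case=> A [r [P [Q [sc hD mx]]]].
case Ah: (A h).
  by exists A, r, P, Q; rewrite Ah in mx.
exists (fun x => ~~ A x), r, Q, P; split=> //; first exact: stair_flip.
  by rewrite Ah.
by rewrite Ah in mx.
Qed.

Lemma ar3 a P Q : a + 1 = P -> Q + a < P + Q.+1 - 1. Proof. lia. Qed.
Lemma ar3' a P Q : a + 1 = P -> a + Q < P + Q.+1 - 1. Proof. lia. Qed.
Lemma ar4 a P Q : a < P+Q-1 -> a < P+Q.+1-1. Proof. lia. Qed.
Lemma ar5 a j P Q : a + 1 = P -> j < P+Q.+1-1 -> P+Q-1 <= j -> a + Q = j. Proof. lia. Qed.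
Lemma ar6 a b P Q : a + 1 = P -> b < P+Q-1 -> Q + a = b -> False. Proof. lia. Qed.
Lemma ar6' a b P Q : a + 1 = P -> b < P+Q-1 -> a + Q = b -> False. Proof. lia. Qed.

Lemma attach_core (V : finType) (e : rel V) (es : symmetric e) (ei : irreflexive e)
   D h A r P Q u :
  stair_core e D A r P Q -> h \in D -> A h -> r h + 1 = P ->
  u \notin D -> e u h -> (forall y, y \in D -> e u y -> y = h) ->
  stair_core e (u |: D) (fun x => if x == u then false else A x)
     (fun x => if x == u then Q else r x) P Q.+1.
Proof.
case=> [bip inj bnd sm [sj ij]] hD Ah mx uD euh nbr.
have nu : forall x, x \in D -> (x == u) = false.
  by move=> x xD; apply/eqP=> xu; move: uD; rewrite -xu xD.
have hu := nu h hD.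
have ec : forall x y, x \in u |: D -> y \in u |: D -> e x y ->
    [\/ x = u /\ y = h, x = h /\ y = u | x \in D /\ y \in D].
  move=> x y; rewrite !inE => /predU1P[->|xD] /predU1P[->|yD] exy.
  - by rewrite ei in exy.
  - by constructor 1; split=> //; apply: nbr.
  - by constructor 2; split=> //; apply: nbr=> //; rewrite es.
  - by constructor 3.
split.
- move=> x y xD yD exy; case: (ec x y xD yD exy) => [[-> ->]|[-> ->]|[xD' yD']].
  + by rewrite eqxx hu Ah.
  + by rewrite eqxx hu Ah.
  + by rewrite !nu //; apply: bip.
- move=> x y; rewrite !inE => /predU1P[->|xD] /predU1P[->|yD] //.
  + rewrite eqxx (nu y yD) => Ay ry; have := bnd y yD; rewrite -Ay -ry ltnn.
    by [].
  + rewrite eqxx (nu x xD) => Ay ry; have := bnd x xD; rewrite Ay ry ltnn.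
    by [].
  + by rewrite !nu //; apply: inj.
- move=> x; rewrite !inE => /predU1P[->|xD]; first by rewrite eqxx.
  rewrite nu //; have := bnd x xD; case: (A x) => // /ltnW; by [].
- move=> x y xD yD exy; case: (ec x y xD yD exy) => [[-> ->]|[-> ->]|[xD' yD']].
  + by rewrite eqxx hu; apply: ar3.
  + by rewrite eqxx hu; apply: ar3'.
  + by rewrite !nu //; apply: ar4; apply: sm.
split.
- move=> j jlt; case: (ltnP j (P + Q - 1)) => jP.
    have [x [y [xD yD exy rj]]] := sj j jP.
    by exists x, y; rewrite !inE xD yD !nu //; split=> //; rewrite orbT.
  exists h, u; rewrite !inE hD eqxx orbT hu; split=> //; first by rewrite es.
  exact: ar5 mx jlt jP.
- move=> x y x' y' xD yD xD' yD' exy exy'.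
  case: (ec x y xD yD exy) => [[-> ->]|[-> ->]|[xD1 yD1]];
  case: (ec x' y' xD' yD' exy') => [[-> ->]|[-> ->]|[xD2 yD2]];
  try by [left|right].
  + rewrite eqxx hu (nu x' xD2) (nu y' yD2) => H; case: (ar6 mx (sm x' y' xD2 yD2 exy') H).
  + rewrite eqxx hu (nu x' xD2) (nu y' yD2) => H; case: (ar6' mx (sm x' y' xD2 yD2 exy') H).
  + rewrite eqxx hu (nu x xD1) (nu y yD1) => H; case: (ar6 mx (sm x y xD1 yD1 exy) (esym H)).
  + rewrite eqxx hu (nu x xD1) (nu y yD1) => H; case: (ar6' mx (sm x y xD1 yD1 exy) (esym H)).
  + by rewrite (nu x xD1) (nu y yD1) (nu x' xD2) (nu y' yD2); apply: ij.
Qed.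

Lemma stair_attach (V : finType) (e : rel V) (es : symmetric e) (ei : irreflexive e) D h u :
  stair e D h -> u \notin D -> e u h -> (forall y, y \in D -> e u y -> y = h) ->
  stair e (u |: D) h /\ stair e (u |: D) u.
Proof.
move=> /stair_flipA [A [r [P [Q [sc hD Ah mx]]]]] uD euh nbr.
have sc' := attach_core es ei sc hD Ah mx uD euh nbr.
have hu : (h == u) = false by apply/eqP=> hu; move: uD; rewrite -hu hD.
split; eexists _, _, _, _; (split; first exact: sc').
- by rewrite !inE hD orbT.
- by rewrite /= hu Ah.
- by rewrite !inE eqxx.
- by rewrite /= eqxx addn1.
Qed.

Lemma stair_base (V : finType) (e : rel V) (ei : irreflexive e) x : stair e [set x] x.
Proof.
exists predT, (fun _ => 0), 1, 0; split; rewrite ?inE ?eqxx //.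
split=> //.
- by move=> a b; rewrite !inE => /eqP-> /eqP->; rewrite ei.
- by move=> a b; rewrite !inE => /eqP-> /eqP->.
- by move=> a b; rewrite !inE => /eqP-> /eqP->; rewrite ei.
split=> //.
by move=> a b a' b'; rewrite !inE => /eqP-> /eqP->; rewrite ei.
Qed.

Lemma stair_leaves (V : finType) (e : rel V) (es : symmetric e) (ei : irreflexive e) D h (L : {set V}) :
  stair e D h -> (forall u, u \in L -> [/\ u \notin D, e u h & forall y, e u y -> y = h]) ->
  stair e (D :|: L) h.
Proof.
move=> st HL.
suff : forall l : seq V, uniq l -> {subset l <= L} -> stair e (D :|: [set x in l]) h.
  move/(_ (enum L) (enum_uniq _)); rewrite (_ : [set x in enum L] = L).
    by apply; move=> x; rewrite mem_enum.
  by apply/setP=> x; rewrite inE mem_enum.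
elim=> [|x l IH] /=.
  by move=> _ _; rewrite (_ : [set x in [::]] = set0) ?setU0 //; apply/setP=> x; rewrite !inE.
case/andP=> xl ul sub.
have [xD exh nb] := HL x (sub x (mem_head _ _)).
have st' := IH ul (fun y yl => sub y (mem_behead (s := x :: l) yl)).
have -> : D :|: [set y in x :: l] = x |: (D :|: [set y in l]).
  by apply/setP=> y; rewrite !inE orbCA.
case: (stair_attach es ei st' _ exh) => //.
- by rewrite !inE negb_or xD.
- by move=> y _; apply: nb.
Qed.

Lemma in_take_nth (T : eqType) (x0 : T) (s : seq T) i j : j < i -> j < size s -> nth x0 s j \in take i s.
Proof.
move=> ji jS; rewrite -(nth_take x0 ji); apply: mem_nth.
by rewrite size_take; case: ifP.
Qed.

Lemma take_nth_in (T : eqType) (x0 : T) (s : seq T) i y : y \in take i s ->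
  exists j, [/\ j < i, j < size s & y = nth x0 s j].
Proof.
case/(nthP x0)=> j; rewrite size_take => jl <-.
have [ji jS] : j < i /\ j < size s by move: jl; case: ifP; lia.
by exists j; split=> //; rewrite nth_take.
Qed.

Lemma cat_stair (V : finType) (e : rel V) (es : symmetric e) (ei : irreflexive e) v :
  caterpillar_component e v -> has_edge_in e (component e v) ->
  exists h, stair e (component e v) h.
Proof.
move=> [s [us [Ts adj]]] [x0 [y0 [x0C [y0C e0]]]].
set C := component e v in Ts adj x0C y0C *.
set T := [set u in C | degree e u != 1] in Ts adj *.
have csym := sym_connect_sym es.
have stepC : forall u y, u \in C -> e u y -> y \in C.
  by move=> u y; rewrite /C /component !inE => vu euy; apply: connect_trans vu (connect1 euy).
have TC : forall u, u \in T -> u \in C by move=> u; rewrite inE => /andP[].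
have leafnb : forall u, u \in C -> u \notin T -> exists w, forall y, e u y = (y == w).
  move=> u uC; rewrite inE uC /= negbK => /cards1P[w Hw].
  by exists w => y; move/setP: Hw => /(_ y); rewrite !inE.
have K2 : forall u w, u \in C -> u \notin T -> e u w -> w \notin T -> forall z, z \in C -> z \in [set u; w].
  move=> u w uC uT euw wT.
  have wC := stepC u w uC euw.
  have [w1 Hu] := leafnb u uC uT.
  have [u1 Hw] := leafnb w wC wT.
  have wu : e w u by rewrite es.
  move: euw wu; rewrite Hu Hw => /eqP ew /eqP eu; subst w1 u1.
  have imp : forall a b, e a b -> a \in [set u; w] -> b \in [set u; w].
    move=> a b eab; rewrite !inE => /orP[/eqP ea|/eqP ea]; subst a.
    - by move: eab; rewrite Hu => ->; rewrite orbT.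
    - by move: eab; rewrite Hw => ->.
  have cl : closed e (mem [set u; w]).
    move=> a b eab; apply/idP/idP; first exact: imp.
    by apply: imp; rewrite es.
  move=> z zC.
  have cuz : connect e u z.
    by move: uC zC; rewrite /C /component !inE csym; apply: connect_trans.
  by rewrite -(closed_connect cl cuz) !inE eqxx.
clearbody T C.
case: s us Ts adj => [|a s'] us Ts adj.
  (* no spine: single edge *)
  have x0T : x0 \notin T by rewrite Ts.
  have y0T : y0 \notin T by rewrite Ts.
  have [w Hw] := leafnb x0 x0C x0T.
  exists x0.
  have -> : C = y0 |: [set x0].
    apply/setP=> z; apply/idP/idP.
      by move/(K2 x0 y0 x0C x0T e0 y0T); rewrite !inE orbC.
    by rewrite !inE; case/orP=> /eqP ->; [exact: y0C | exact: x0C].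
  case: (stair_attach es ei (stair_base ei x0) (u := y0)) => //.
  - by rewrite inE; apply/eqP=> yx; move: e0; rewrite yx ei.
  - by rewrite es.
  - by move=> y; rewrite inE => /eqP.
have s0 : 0 < size (a :: s') by [].
move: (a :: s') us Ts adj s0 => s us Ts adj s0.
have sT : forall j, j < size s -> nth v s j \in T by move=> j jS; rewrite Ts mem_nth.
have sC : forall j, j < size s -> nth v s j \in C by move=> j jS; apply: TC; apply: sT.
have sinj : forall j j', j < size s -> j' < size s -> nth v s j = nth v s j' -> j = j'.
  by move=> j j' jS jS' /eqP; rewrite nth_uniq // => /eqP.
have lnb2 : forall u b c, u \in C -> u \notin T -> e u b -> e u c -> b = c.
  move=> u b c uC uT; have [w Hw] := leafnb u uC uT.
  by rewrite !Hw => /eqP -> /eqP ->.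
have adjE : forall i j, i < size s -> j < size s -> e (nth v s i) (nth v s j) ->
    i = j.+1 \/ j = i.+1.
  move=> i j iS jS eij.
  have := (adj _ _ (sT i iS) (sT j jS)).1 eij.
  case=> i' i's; rewrite (set_nth_default v _ (ltnW i's)) (set_nth_default v _ i's).
  have i's' := ltnW i's.
  case=> [[h1 h2]|[h1 h2]].
  - have e1 := sinj _ _ i's' iS h1; have e2 := sinj _ _ i's jS h2.
    by right; rewrite -e1 -e2.
  - have e1 := sinj _ _ i's' jS h1; have e2 := sinj _ _ i's iS h2.
    by left; rewrite -e1 -e2.
have adjI : forall i, i.+1 < size s -> e (nth v s i.+1) (nth v s i).
  move=> i iS; have iS' := ltnW iS.
  apply/(adj _ _ (sT _ iS) (sT _ iS')).2; exists i => //.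
  by right; rewrite (set_nth_default v _ iS') (set_nth_default v _ iS).
have hasE : forall u i, has (e u) (take i s) -> exists j, [/\ j < i, j < size s & e u (nth v s j)].
  move=> u i /hasP[y /(take_nth_in v)[j [ji jS ->]] euy].
  by exists j.
pose D i := [set u in C | (u \in take i.+1 s) || ((u \notin T) && has (e u) (take i s))].
pose L i := [set u in C | (u \notin T) && e u (nth v s i)].
have leaves : forall i, i < size s -> stair e (D i) (nth v s i) ->
    stair e (D i :|: L i) (nth v s i).
  move=> i iS st; apply: stair_leaves => // u; rewrite !inE => /and3P[uC uT eu].
  split=> //.
  - rewrite uC /= negb_or; apply/andP; split.
      by apply: contra uT; move/mem_take; rewrite Ts.
    rewrite uT /=; apply/negP=> /hasE[j [ji jS euj]].
    have := sinj _ _ jS iS (lnb2 _ _ _ uC uT euj eu) => eji.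
    by move: ji; rewrite eji ltnn.
  - by move=> y euy; apply: lnb2 uC uT euy eu.
have spine : forall i, i.+1 < size s -> stair e (D i :|: L i) (nth v s i) ->
    stair e (D i.+1) (nth v s i.+1).
  move=> i iS1 st; have iS := ltnW iS1.
  set u := nth v s i.+1.
  have uT : u \in T := sT _ iS1.
  have uC : u \in C := sC _ iS1.
  have uD : u \notin D i :|: L i.
    rewrite !inE uT /= !andbF !orbF andbC; apply/negP=> /andP[/(take_nth_in v)[j [ji jS]]].
    move/(sinj _ _ iS1 jS) => ej; move: ji ej; clear; lia.
  have nb : forall y, y \in D i :|: L i -> e u y -> y = nth v s i.
    move=> y; rewrite !inE => /orP[/andP[yC /orP[/(take_nth_in v)[j [ji jS ->]]|/andP[yT /hasE[j [ji jS ej]]]]]|/and3P[yC yT eyi]] euy.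
    - case: (adjE _ _ iS1 jS euy) => [[->] //| ej].
      by exfalso; move: ji ej; clear; lia.
    - have ej' := sinj _ _ iS1 jS (lnb2 _ _ _ yC yT (eq_ind _ _ euy _ (es _ _)) ej).
      by exfalso; move: ji ej'; clear; lia.
    - have ej' := sinj _ _ iS1 iS (lnb2 _ _ _ yC yT (eq_ind _ _ euy _ (es _ _)) eyi).
      by exfalso; move: ej'; clear; lia.
  have [_ st'] := stair_attach es ei st uD (adjI _ iS1) nb.
  suff -> : D i.+1 = u |: (D i :|: L i) by [].
  apply/setP=> z; rewrite !inE (take_nth v iS1) (take_nth v iS) has_rcons !mem_rcons !in_cons.
  case: (z =P u) => [->|_] /=; first by rewrite uC.
  rewrite mem_rcons in_cons.
  by case: (z \in C); case: (z \in T); case: (z == nth v s i); case: (e z _); case: (has _ _); case: (z \in take i s).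
have allD : forall i, i < size s -> stair e (D i) (nth v s i).
  elim=> [|i IH] iS.
    suff -> : D 0 = [set nth v s 0] by apply: stair_base.
    apply/setP=> z; rewrite !inE (take_nth v s0) take0 /= andbF orbF mem_seq1.
    case: (z =P nth v s 0) => [->|_]; last by rewrite andbF.
    by rewrite andbT; apply: (sC 0).
  apply: spine => //; apply: leaves; first exact: ltnW.
  by apply: IH; apply: ltnW.
have kS : (size s).-1 < size s by rewrite prednK.
have stF := leaves _ kS (allD _ kS).
exists (nth v s (size s).-1).
suff <- : D (size s).-1 :|: L (size s).-1 = C by [].
apply/setP=> z; apply/idP/idP.
  by rewrite !inE => /orP[/andP[]|/andP[]].
move=> zC; rewrite !inE zC /=.
rewrite prednK //.
rewrite take_size.
case zT: (z \in T); first by rewrite -Ts zT.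
have [w Hw] := leafnb z zC (negbT zT).
have ezw : e z w by rewrite Hw.
have wT : w \in T.
  apply/negPn/negP=> wT.
  have := K2 z w zC (negbT zT) ezw wT (nth v s 0) (sC 0 s0).
  have := sT 0 s0; rewrite !inE /= => aT.
  by case/orP=> /eqP ea; [move: zT | move: wT]; rewrite -ea aT.
move: wT; rewrite Ts => /(nthP v)[j jS wj].
case: (ltnP j (size s).-1) => jk.
  apply/orP; left; apply/orP; right; apply/hasP; exists (nth v s j).
    by apply: in_take_nth.
  by rewrite wj.
have jk' : j = (size s).-1 by move: jS jk s0; clear; move: (size s) => n; lia.
by rewrite jk' in wj; rewrite wj ezw orbT.
Qed.

Definition good (V : finType) (e : rel V) (S : {set V}) : Prop :=
  exists (f : V -> nat) (M : nat), [/\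
  (forall x y, x \in S -> y \in S -> f x = f y -> x = y),
  (forall x, x \in S -> f x < 2 * M),
  (forall x y, x \in S -> y \in S -> e x y -> exists2 k, k < M & natdist (f x) (f y) = 2 * k + 1),
  (forall k, k < M -> exists x y, [/\ x \in S, y \in S, e x y & natdist (f x) (f y) = 2 * k + 1]) &
  (forall x y x' y', x \in S -> y \in S -> x' \in S -> y' \in S -> e x y -> e x' y' ->
     natdist (f x) (f y) = natdist (f x') (f y') -> (x = x' /\ y = y') \/ (x = y' /\ y = x'))].

Lemma natdistC a b : natdist a b = natdist b a.
Proof. by rewrite /natdist addnC. Qed.

Lemma natdist_shift a b d : natdist (a + d) (b + d) = natdist a b.
Proof. rewrite /natdist; lia. Qed.

Lemma nd_C a b P Q M' : a < P -> b < Q -> a + b < P+Q-1 ->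
  natdist (2*a) (2*(M'+(P+Q-1)) - 1 - 2*b) = 2*(M'+(P+Q-1)-1-(a+b))+1 /\
  M' <= M'+(P+Q-1)-1-(a+b) < M'+(P+Q-1).
Proof. rewrite /natdist; lia. Qed.

Lemma B2 a b P Q M' : a < P -> b < Q -> 2*a = 2*(M'+(P+Q-1)) - 1 - 2*b -> False.
Proof. lia. Qed.
Lemma B3 b b' Q P M' : b < Q -> b' < Q -> 2*(M'+(P+Q-1)) - 1 - 2*b = 2*(M'+(P+Q-1)) - 1 - 2*b' -> b = b'.
Proof. lia. Qed.
Lemma B4 a c P M' : a < P -> c < 2*M' -> 2*a = c + (2*P-1) -> False.
Proof. lia. Qed.
Lemma B5 b c P Q M' : 0 < P -> b < Q -> c < 2*M' -> 2*(M'+(P+Q-1)) - 1 - 2*b = c + (2*P-1) -> False.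
Proof. lia. Qed.
Lemma B6 a P Q M' : 0 < Q -> a < P -> 2*a < 2*(M'+(P+Q-1)).
Proof. lia. Qed.
Lemma B7 b P Q M' : 0 < P -> b < Q -> 2*(M'+(P+Q-1)) - 1 - 2*b < 2*(M'+(P+Q-1)).
Proof. lia. Qed.
Lemma B8 c P Q M' : 0 < P -> 0 < Q -> c < 2*M' -> c + (2*P-1) < 2*(M'+(P+Q-1)).
Proof. lia. Qed.
Lemma B9 k M' P Q : k < M'+(P+Q-1) -> M' <= k -> M'+(P+Q-1)-1-(M'+(P+Q-1)-1-k) = k /\ M'+(P+Q-1)-1-k < P+Q-1.
Proof. lia. Qed.
Lemma B10 s s' M : s < M -> s' < M -> M-1-s = M-1-s' -> s = s'.
Proof. lia. Qed.
Lemma B11 (k k' M' : nat) : k' < M' -> M' <= k -> 2*k+1 = 2*k'+1 -> False.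
Proof. lia. Qed.
Lemma B12 k M' m : k < M' -> k < M' + m.
Proof. lia. Qed.

Lemma good_comb (V : finType) (e : rel V) (es : symmetric e) (C S' : {set V}) A r P Q :
  stair_core e C A r P Q -> 0 < P -> 0 < Q ->
  (forall x, x \in C -> x \notin S') ->
  (forall x y, x \in C -> e x y -> y \in C) ->
  (forall x y, x \in S' -> e x y -> y \in S') ->
  good e S' -> good e (C :|: S').
Proof.
case=> [bip inj bnd sm [sj ij]] P0 Q0 dis clC clS [f' [M' [i1 i2 i3 i4 i5]]].
pose M := M' + (P+Q-1).
pose f x := if x \in C then (if A x then 2 * r x else 2 * M - 1 - 2 * r x) else f' x + (2*P-1).
have fC : forall x, x \in C -> f x = if A x then 2 * r x else 2*M-1-2*r x.
  by move=> x xC; rewrite /f xC.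
have fS : forall x, x \in S' -> f x = f' x + (2*P-1).
  move=> x xS; rewrite /f; case: ifP => // xC.
  by move: (dis x xC); rewrite xS.
have wC : forall x y, x \in C -> y \in C -> e x y ->
    natdist (f x) (f y) = 2*(M-1-(r x + r y))+1 /\ M' <= M-1-(r x+r y) < M.
  move=> x y xC yC exy; have b := bip x y xC yC exy; have s := sm x y xC yC exy.
  have bx := bnd x xC; have bY := bnd y yC.
  rewrite !fC //; case Ax: (A x) bx b; case Ay: (A y) bY => //= bY bx _.
  - exact: nd_C.
  - rewrite natdistC (addnC (r x)); apply: nd_C => //; by rewrite addnC.
exists f, M; split.
- move=> x y /setUP[xC|xS] /setUP[yC|yS].
  + rewrite !fC //; have bx := bnd x xC; have bY := bnd y yC.
    case Ax: (A x) bx; case Ay: (A y) bY => bY bx.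
    * move=> /eqP; rewrite eqn_mul2l /= => /eqP; apply: inj => //; by rewrite Ax Ay.
    * by move=> H; case: (B2 bx bY H).
    * by move=> H; case: (B2 bY bx (esym H)).
    * move/(B3 bx bY) => H; apply: inj => //; by rewrite Ax Ay.
  + rewrite fC // fS //; have bx := bnd x xC; case Ax: (A x) bx => bx H.
    * by case: (B4 bx (i2 y yS) H).
    * by case: (B5 P0 bx (i2 y yS) H).
  + rewrite fS // fC //; have bY := bnd y yC; case Ay: (A y) bY => bY H.
    * by case: (B4 bY (i2 x xS) (esym H)).
    * by case: (B5 P0 bY (i2 x xS) (esym H)).
  + rewrite !fS // => /eqP; rewrite eqn_add2r => /eqP; exact: i1.
- move=> x /setUP[xC|xS].
    rewrite fC //; have bx := bnd x xC; case: (A x) bx => bx.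
      exact: B6.
    exact: B7.
  by rewrite fS //; apply: B8 => //; apply: i2.
- move=> x y /setUP[xC|xS] _ exy.
    have yC := clC x y xC exy; have [-> /andP[_ h]] := wC x y xC yC exy.
    by exists (M-1-(r x + r y)).
  have yS := clS x y xS exy.
  rewrite !fS // natdist_shift; have [k kM ->] := i3 x y xS yS exy.
  by exists k => //; apply: B12.
- move=> k kM; case: (ltnP k M') => kM'.
    have [x [y [xS yS exy w]]] := i4 k kM'.
    exists x, y; split; rewrite ?inE ?xS ?yS ?orbT //.
    by rewrite !fS // natdist_shift.
  have [k1 k2] := B9 kM kM'.
  have [x [y [xC yC exy sj']]] := sj _ k2.
  exists x, y; split; rewrite ?inE ?xC ?yC //.
  by have [-> _] := wC x y xC yC exy; rewrite sj' k1.
- move=> x y x' y' /setUP[xC|xS] _ /setUP[xC'|xS'] _ exy exy'.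
  + have yC := clC x y xC exy; have yC' := clC x' y' xC' exy'.
    have [-> /andP[_ h]] := wC x y xC yC exy; have [-> /andP[_ h']] := wC x' y' xC' yC' exy'.
    move=> /eqP; rewrite eqn_add2r eqn_mul2l /= => /eqP H.
    apply: ij => //; apply: (B10 _ _ H).
      exact: (ltn_addl M' (sm x y xC yC exy)).
    exact: (ltn_addl M' (sm x' y' xC' yC' exy')).
  + have yC := clC x y xC exy; have yS' := clS x' y' xS' exy'.
    have [-> /andP[h _]] := wC x y xC yC exy.
    rewrite !(fS x') // !(fS y') // natdist_shift; have [k kM ->] := i3 x' y' xS' yS' exy'.
    by move=> H; case: (B11 kM h H).
  + have yS := clS x y xS exy; have yC' := clC x' y' xC' exy'.
    have [-> /andP[h _]] := wC x' y' xC' yC' exy'.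
    rewrite (fS x) // (fS y) // natdist_shift; have [k kM ->] := i3 x y xS yS exy.
    by move=> H; case: (B11 kM h (esym H)).
  + have yS := clS x y xS exy; have yS' := clS x' y' xS' exy'.
    rewrite !fS // !natdist_shift; exact: i5.
Qed.

Lemma good0 (V : finType) (e : rel V) : good e set0.
Proof.
exists (fun _ => 0), 0; split.
- by move=> x y; rewrite inE.
- by move=> x; rewrite inE.
- by move=> x y; rewrite inE.
- by [].
- by move=> x y x' y'; rewrite inE.
Qed.

Lemma good_all (V : finType) (e : rel V) (es : symmetric e) (ei : irreflexive e)
  (Hc : forall v, caterpillar_component e v /\ has_edge_in e (component e v)) :
  forall n (S : {set V}), #|S| <= n -> (forall x y, x \in S -> e x y -> y \in S) -> good e S.
Proof.
elim=> [|n IH] S Sn clS.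
  by move: Sn; rewrite leqn0 => /eqP/cards0_eq ->; apply: good0.
case: (set_0Vmem S) => [->|[v vS]]; first exact: good0.
have [h st] := cat_stair es ei (Hc v).1 (Hc v).2.
have [A [r [P [Q [sc hD Ah mx]]]]] := stair_flipA st.
have [x0 [y0 [x0C [y0C e0]]]] := (Hc v).2.
have csym := sym_connect_sym es.
have clC : forall x y, x \in component e v -> e x y -> y \in component e v.
  by move=> x y; rewrite /component !inE => vx exy; apply: connect_trans vx (connect1 exy).
have CS : forall x, x \in component e v -> x \in S.
  have cl : closed e (mem S).
    move=> a b eab; apply/idP/idP => H; first exact: clS H eab.
    by apply: clS H _; rewrite es.
  by move=> x; rewrite /component inE => vx; rewrite -(closed_connect cl vx).
have vC : v \in component e v by rewrite /component inE connect0.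
move: (component e v) sc x0C y0C clC CS vC => C sc x0C y0C clC CS vC.
have Q0 : 0 < Q.
  case: sc => bip _ bnd _ _.
  have [ax|ay] : ~~ A x0 \/ ~~ A y0.
    by move: (bip _ _ x0C y0C e0); case: (A x0); case: (A y0); auto.
    by have := bnd _ x0C; rewrite (negbTE ax); apply: leq_ltn_trans.
  by have := bnd _ y0C; rewrite (negbTE ay); apply: leq_ltn_trans.
have P0 : 0 < P by rewrite -mx addn1.
pose S' := S :\: C.
have gS' : good e S'.
  apply: IH.
    have : S' \subset S :\ v.
      by apply/subsetP=> z; rewrite !inE => /andP[zC zS]; rewrite zS andbT; apply: contra zC => /eqP->.
    move/subset_leq_card => H1; move: (cardsD1 v S); rewrite vS add1n => H.
    by move: Sn; rewrite H ltnS; apply: leq_trans H1.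
  move=> x y; rewrite !inE => /andP[xC xS] exy; rewrite (clS x y xS exy) andbT.
  by apply: contra xC => yC; apply: clC yC _; rewrite es.
have := good_comb es sc P0 Q0 _ clC _ gS'.
rewrite (_ : C :|: S' = S).
  apply.
    by move=> x xC; rewrite !inE xC.
  move=> x y; rewrite !inE => /andP[xC xS] exy; rewrite (clS x y xS exy) andbT.
  by apply: contra xC => yC; apply: clC yC _; rewrite es.
apply/setP=> z; rewrite !inE; case zC: (z \in C) => //=.
by rewrite CS.
Qed.

Lemma set2_eq (V : finType) (a b c d : V) : [set a; b] = [set c; d] -> a != b ->
  (a = c /\ b = d) \/ (a = d /\ b = c).
Proof.
move=> H ab.
have : a \in [set c; d] by rewrite -H !inE eqxx.
have : b \in [set c; d] by rewrite -H !inE eqxx orbT.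
rewrite !inE => /orP[/eqP bc|/eqP bd] /orP[/eqP ac|/eqP ad].
- by move: ab; rewrite ac bc eqxx.
- by right.
- by left.
- by move: ab; rewrite ad bd eqxx.
Qed.

Lemma wk k M : k < M -> 2 * k + 1 < 2 * M.
Proof. lia. Qed.

Lemma wk2 w M : odd w -> w < 2 * M -> w./2 < M /\ w = 2 * w./2 + 1.
Proof.
move=> ow wM; have := odd_double_half w; rewrite ow -muln2 => H; lia.
Qed.

Theorem theorem2 (V : finType) (e : rel V) :
  simple_graph e ->
  forest e ->
  (forall v : V, caterpillar_component e v /\ has_edge_in e (component e v)) ->
  odd_graceful e.
Proof.
move=> [es ei] _ Hc.
have [f [M [i1 i2 i3 i4 i5]]] :=
  good_all es ei Hc (leqnn #|[set: V]|) (fun x y _ _ => in_setT y).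
pose g (k : 'I_M) := if [pick p : V * V | e p.1 p.2 && (natdist (f p.1) (f p.2) == 2 * k + 1)]
  is Some p then [set p.1; p.2] else set0.
have gspec : forall k : 'I_M, exists x y, [/\ e x y, natdist (f x) (f y) = 2 * k + 1 & g k = [set x; y]].
  move=> k; rewrite /g; case: pickP => [[x y] /= /andP[exy /eqP w]|none].
    by exists x, y.
  have [x [y [_ _ exy w]]] := i4 k (ltn_ord k).
  by move: (none (x, y)); rewrite /= exy w eqxx.
have nM : #|edges e| = M.
  have -> : edges e = [set g k | k : 'I_M].
    apply/setP=> E; apply/idP/idP.
      case/imsetP=> p; rewrite inE => ep ->.
      have [k kM w] := i3 _ _ (in_setT p.1) (in_setT p.2) ep.
      have [x [y [exy w' gk]]] := gspec (Ordinal kM).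
      apply/imsetP; exists (Ordinal kM) => //; rewrite gk.
      case: (i5 _ _ _ _ (in_setT _) (in_setT _) (in_setT x) (in_setT y) ep exy); first by rewrite w w'.
        by case=> -> ->.
      by case=> -> ->; rewrite setUC.
    case/imsetP=> k _ ->; have [x [y [exy _ ->]]] := gspec k.
    by apply/imsetP; exists (x, y); rewrite ?inE.
  rewrite card_imset ?card_ord // => k1 k2 gk.
  have [x1 [y1 [e1 w1 g1]]] := gspec k1; have [x2 [y2 [e2 w2 g2]]] := gspec k2.
  have xy1 : x1 != y1 by apply/eqP=> xy; move: e1; rewrite xy ei.
  apply: val_inj; move: gk; rewrite g1 g2 => /set2_eq /(_ xy1) H.
  have : 2 * k1 + 1 = 2 * k2 + 1.
    by rewrite -w1 -w2; case: H => [[-> ->]|[-> ->]] //; rewrite natdistC.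
  by move=> /eqP; rewrite eqn_add2r eqn_mul2l /= => /eqP.
rewrite /odd_graceful nM; exists f; split; [|split].
- by move=> x y; apply: i1; apply: in_setT.
- by move=> x; apply: i2; apply: in_setT.
- move=> w; split.
    case=> x [y [exy ->]]; have [k kM ->] := i3 x y (in_setT _) (in_setT _) exy.
    split; first by rewrite addn1 /= oddM.
    exact: wk.
  case=> ow wM; have [kM wE] := wk2 ow wM.
  have [x [y [_ _ exy wxy]]] := i4 _ kM.
  by exists x, y; rewrite wxy -wE.
Qed.
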